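(* On the class of symmetric bimodal models, $\mathcal{L}(\boxdot)$ is less expressive than $\mathcal{L}(\boxplus)$: every $\mathcal{L}(\boxdot)$-formula is equivalent on this class to some $\mathcal{L}(\boxplus)$-formula, but some $\mathcal{L}(\boxplus)$-formula is not equivalent on this class to any $\mathcal{L}(\boxdot)$-formula.
   Context: Fix a nonempty set $\mathbf{P}$ of propositional variables. A bimodal model is $\mathcal{M}=\langle S,R_1,R_2,V\rangle$ with $S$ a nonempty set, $R_1,R_2\subseteq S\times S$, and $V:\mathbf{P}\to\mathcal{P}(S)$. A bimodal model is symmetric if both $R_1$ and $R_2$ are symmetric. Write $R_i(s)=\{t\mid sR_it\}$. The languages are $\mathcal{L}(\boxdot):\ \phi::=p\mid\neg\phi\mid(\phi\wedge\phi)\mid\boxdot\phi$ and $\mathcal{L}(\boxplus):\ \phi::=p\mid\neg\phi\mid(\phi\wedge\phi)\mid\boxplus\phi$. Truth: $\mathcal{M},s\vDash p$ iff $s\in V(p)$; Booleans as usual; $\mathcal{M},s\vDash\boxdot\phi$ iff for all $t,u$ with $sR_1t$ and $sR_2u$, ($\mathcal{M},t\vDash\phi\iff\mathcal{M},u\vDash\phi$); $\mathcal{M},s\vDash\boxplus\phi$ iff ($\mathcal{M},t\vDash\phi$ for all $t\in R_1(s)$) or ($\mathcal{M},u\vDash\neg\phi$ for all $u\in R_2(s)$). Two formulas are equivalent on a class of models if they are true at exactly the same pointed models of that class. *)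

(* Defs.v *)
Set Implicit Arguments.

Record model (P S : Type) : Type := Model {
  R1 : S -> S -> Prop;
  R2 : S -> S -> Prop;
  V  : P -> S -> Prop
}.

Definition symmetric_model (P S : Type) (M : model P S) : Prop :=
  (forall s t, R1 M s t -> R1 M t s) /\ (forall s t, R2 M s t -> R2 M t s).

Inductive fdot (P : Type) : Type :=
| DVar : P -> fdot P
| DNeg : fdot P -> fdot P
| DAnd : fdot P -> fdot P -> fdot P
| DBox : fdot P -> fdot P.

Inductive fplus (P : Type) : Type :=
| PVar : P -> fplus P
| PNeg : fplus P -> fplus P
| PAnd : fplus P -> fplus P -> fplus P
| PBox : fplus P -> fplus P.

Fixpoint sat_dot (P S : Type) (M : model P S) (s : S) (phi : fdot P) : Prop :=
  match phi with
  | DVar p => V M p s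
  | DNeg phi => ~ sat_dot M s phi
  | DAnd phi psi => sat_dot M s phi /\ sat_dot M s psi
  | DBox phi => forall t u, R1 M s t -> R2 M s u ->
                  (sat_dot M t phi <-> sat_dot M u phi)
  end.

Fixpoint sat_plus (P S : Type) (M : model P S) (s : S) (phi : fplus P) : Prop :=
  match phi with
  | PVar p => V M p s
  | PNeg phi => ~ sat_plus M s phi
  | PAnd phi psi => sat_plus M s phi /\ sat_plus M s psi
  | PBox phi => (forall t, R1 M s t -> sat_plus M t phi) \/
                (forall u, R2 M s u -> ~ sat_plus M u phi)
  end.

Definition equiv_sym (P : Type) (phi : fdot P) (psi : fplus P) : Prop :=
  forall (S : Type) (M : model P S), symmetric_model M ->
    forall s : S, sat_dot M s phi <-> sat_plus M s psi.

(* Main.v *)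
Require Import Defs.
From Stdlib Require Import Classical.

Fixpoint tr {P : Type} (phi : fdot P) : fplus P :=
  match phi with
  | DVar p => PVar p
  | DNeg a => PNeg (tr a)
  | DAnd a b => PAnd (tr a) (tr b)
  | DBox a => PAnd (PBox (tr a)) (PBox (PNeg (tr a)))
  end.

Lemma tr_ok (P S : Type) (M : model P S) (phi : fdot P) :
  forall s, sat_dot M s phi <-> sat_plus M s (tr phi).
Proof.
  induction phi as [p|a IH|a IHa b IHb|a IH]; intro s; simpl.
  - tauto.
  - rewrite IH; tauto.
  - rewrite IHa, IHb; tauto.
  - split.
    + intro H. split.
      * destruct (classic (forall t, R1 M s t -> sat_plus M t (tr a))) as [H1|H1].
        { left; exact H1. }
        right. intros u Hu Hsu.
        apply H1. intros t Ht. apply IH. apply (proj2 (H t u Ht Hu)). apply IH; exact Hsu.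
      * destruct (classic (forall t, R1 M s t -> ~ sat_plus M t (tr a))) as [H1|H1].
        { left; exact H1. }
        right. intros u Hu Hsu. apply Hsu.
        apply IH. apply NNPP. intro Hn. apply H1. intros t Ht Hta.
        apply Hn. apply (proj1 (H t u Ht Hu)). apply IH; exact Hta.
    + intros [[H1|H1] [H2|H2]] t u Ht Hu; rewrite !IH;
      try specialize (H1 t Ht); try specialize (H1 u Hu);
      try specialize (H2 t Ht); try specialize (H2 u Hu);
      split; intro; try tauto; apply NNPP; tauto.
Qed.

Definition swap {P S : Type} (M : model P S) : model P S :=
  @Model P S (R2 M) (R1 M) (V M).

Lemma swap_ok (P S : Type) (M : model P S) (phi : fdot P) :
  forall s, sat_dot M s phi <-> sat_dot (swap M) s phi.
Proof.
  induction phi as [p|a IH|a IHa b IHb|a IH]; intro s; simpl.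
  - tauto.
  - rewrite IH; tauto.
  - rewrite IHa, IHb; tauto.
  - split; intros H t u Ht Hu.
    + rewrite <- !IH. symmetry. apply H; assumption.
    + specialize (H u t Hu Ht). rewrite <- !IH in H. symmetry; exact H.
Qed.

Theorem proposition3p3 (P : Type) (p0 : P) :
  (forall phi : fdot P, exists psi : fplus P, equiv_sym phi psi) /\
  (exists psi : fplus P, forall phi : fdot P, ~ equiv_sym phi psi).
Proof.
  split.
  - intro phi. exists (tr phi). intros S M _ s. apply tr_ok.
  - exists (PBox (PVar p0)). intros phi Heq.
    set (M := @Model P nat (fun x y : nat => (x = 0 /\ y = 1) \/ (x = 1 /\ y = 0))
                    (fun x y : nat => (x = 0 /\ y = 2) \/ (x = 2 /\ y = 0))
                    (fun (_ : P) (x : nat) => x = 1)).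
    assert (HM : symmetric_model M).
    { split; simpl; intros; tauto. }
    assert (HM' : symmetric_model (swap M)).
    { split; simpl; intros; tauto. }
    pose proof (Heq nat M HM 0) as E1.
    pose proof (Heq nat (swap M) HM' 0) as E2.
    rewrite <- swap_ok in E2.
    assert (A : sat_plus M 0 (PBox (PVar p0))).
    { simpl. left. intros t [[_ ->]|[H _]]; [reflexivity|discriminate]. }
    assert (B : ~ sat_plus (swap M) 0 (PBox (PVar p0))).
    { simpl. intros [H|H].
      - specialize (H 2 (or_introl (conj eq_refl eq_refl))). discriminate.
      - exact (H 1 (or_introl (conj eq_refl eq_refl)) eq_refl). }
    apply B. apply E2. apply E1. exact A.
Qed.
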